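(* Let $\mathbb{Y}=\sum_{(i,j)\in D_{\mathbb{X}}}m_{ij}P_{ij}$ be an ACM fat point scheme in $\mathbb{P}^1\times\mathbb{P}^1$ over a field $K$ of characteristic zero, supported at $\mathbb{X}$, with coordinates chosen so that $x_0,y_0$ is a regular sequence in $R_{\mathbb{Y}}$, and let $\vartheta_{\mathbb{Y}}$ be its Kähler different. Then: (a) For all $(i,j)\in\mathbb{N}^2$, $\operatorname{HF}_{\vartheta_{\mathbb{Y}}}(i,j)\le\operatorname{HF}_{\vartheta_{\mathbb{Y}}}(i+1,j)$ and $\operatorname{HF}_{\vartheta_{\mathbb{Y}}}(i,j)\le\operatorname{HF}_{\vartheta_{\mathbb{Y}}}(i,j+1)$. (b) $\operatorname{HF}_{\vartheta_{\mathbb{Y}}}=0$ if and only if $m_{ij}\ge2$ for all $P_{ij}\in\mathbb{X}$. (c) If $s'$ is the number of points $P_{ij}\in\mathbb{X}$ with $m_{ij}=1$, then $\operatorname{HF}_{\vartheta_{\mathbb{Y}}}(i,j)=s'$ for all sufficiently large $i,j$.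
   Context: $S=K[X_0,X_1,Y_0,Y_1]$ with $\deg X_i=(1,0)$, $\deg Y_i=(0,1)$. For a finite set $\mathbb{X}$ of distinct $K$-rational points of $\mathbb{P}^1\times\mathbb{P}^1$, $P_{ij}=Q_i\times R_j$, $D_{\mathbb{X}}=\{(i,j)\mid P_{ij}\in\mathbb{X}\}$, $\wp_{ij}$ the vanishing ideal of $P_{ij}$; for $m_{ij}\ge1$, $I_{\mathbb{Y}}=\bigcap\wp_{ij}^{m_{ij}}$, $R_{\mathbb{Y}}=S/I_{\mathbb{Y}}$, $x_i,y_i$ the images of $X_i,Y_i$; $\mathbb{Y}$ is ACM if $R_{\mathbb{Y}}$ is Cohen–Macaulay (then after linear changes of coordinates in $\{X_0,X_1\}$ and in $\{Y_0,Y_1\}$ one may assume $x_0,y_0$ is a regular sequence). The Kähler different $\vartheta_{\mathbb{Y}}$ is the initial Fitting ideal of $\Omega^1_{R_{\mathbb{Y}}/K[x_0,y_0]}$: if $F_1,\dots,F_u$ are bihomogeneous generators of $I_{\mathbb{Y}}$, it is the bihomogeneous ideal of $R_{\mathbb{Y}}$ generated by the residue classes of the $2\times2$ minors $\frac{\partial F_a}{\partial X_1}\frac{\partial F_b}{\partial Y_1}-\frac{\partial F_b}{\partial X_1}\frac{\partial F_a}{\partial Y_1}$. $\operatorname{HF}_{\vartheta_{\mathbb{Y}}}(i,j)=\dim_K(\vartheta_{\mathbb{Y}})_{i,j}$. *)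

(* Defs.v *)
From mathcomp Require Import all_boot all_order all_algebra.
From mathcomp Require Import mpoly.
From Stdlib Require Import ClassicalEpsilon.

Set Implicit Arguments.
Unset Strict Implicit.
Unset Printing Implicit Defensive.

Import GRing.Theory.
Local Open Scope ring_scope.

Section Defs.
Variable K : fieldType.

Definition S := {mpoly K[4]}.
Definition vX0 : 'I_4 := inord 0.
Definition vX1 : 'I_4 := inord 1.
Definition vY0 : 'I_4 := inord 2.
Definition vY1 : 'I_4 := inord 3.
Definition X0 : S := 'X_vX0.
Definition X1 : S := 'X_vX1.
Definition Y0 : S := 'X_vY0.
Definition Y1 : S := 'X_vY1.

Definition bideg (mo : 'X_{1..4}) : nat * nat :=
  ((mo vX0 + mo vX1)%N, (mo vY0 + mo vY1)%N).

(* f is bihomogeneous of bidegree d (0 is bihomogeneous of every bidegree) *)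
Definition bihom (d : nat * nat) (f : S) : Prop :=
  forall mo, mo \in msupp f -> bideg mo = d.

Definition ideal_gen (gs : seq S) (f : S) : Prop :=
  exists cs : seq S, size cs = size gs /\
    f = \sum_(k < size gs) cs`_k * gs`_k.

(* A point Q = [a0 : a1] of P^1 is given by homogeneous coordinates (a0,a1).
   The linear form a1 X - a0 X' vanishes exactly at Q. *)
Definition lin_form (a : K * K) (U V : S) : S := a.2 *: U - a.1 *: V.

Definition wp_gens (q r : K * K) : seq S :=
  [:: lin_form q X0 X1; lin_form r Y0 Y1].

Definition wp_pow_gens (q r : K * K) (m : nat) : seq S :=
  [seq (lin_form q X0 X1) ^+ k * (lin_form r Y0 Y1) ^+ (m - k) | k <- iota 0 m.+1].

Definition in_wp_pow (q r : K * K) (m : nat) (f : S) : Prop :=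
  ideal_gen (wp_pow_gens q r m) f.

Definition in_IY (r t : nat) (Q : 'I_r -> K * K) (R : 'I_t -> K * K)
  (D : {set 'I_r * 'I_t}) (m : 'I_r -> 'I_t -> nat) (f : S) : Prop :=
  forall p, p \in D -> in_wp_pow (Q p.1) (R p.2) (m p.1 p.2) f.

(* distinct points of P^1, given by nonzero coordinate vectors
   that are pairwise non-proportional *)
Definition distinct_P1 (n : nat) (Q : 'I_n -> K * K) : Prop :=
  (forall i, Q i != (0, 0)) /\
  (forall i j, i != j -> (Q i).1 * (Q j).2 != (Q i).2 * (Q j).1).

(* x0, y0 (residue classes of X0, Y0) form a regular sequence in S / I,
   where I is given by the membership predicate inI *)
Definition regular_x0_y0 (inI : S -> Prop) : Prop :=
  (forall f : S, inI (X0 * f) -> inI f) /\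
  (forall f : S, (exists g h, Y0 * f = g + X0 * h /\ inI g) ->
                 (exists g h, f = g + X0 * h /\ inI g)) /\
  ~ (exists g h1 h2, 1 = g + X0 * h1 + Y0 * h2 /\ inI g).

Definition kahler_minors (F : seq S) : seq S :=
  [seq mderiv vX1 Fa * mderiv vY1 Fb - mderiv vX1 Fb * mderiv vY1 Fa
   | Fa <- F, Fb <- F].

(* membership in the preimage in S of the Kähler different:
   (minors) + I *)
Definition in_kahler_pre (inI : S -> Prop) (F : seq S) (f : S) : Prop :=
  exists g h, f = g + h /\ inI g /\ ideal_gen (kahler_minors F) h.

(* d is the K-dimension of (A_d + I_d) / I_d for a bidegree d, i.e. of the
   image of A_d in (S/I)_d : d is the maximal size of a family of
   bihomogeneous elements of A of bidegree dg that is K-linearly independent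
   modulo I *)
Definition indep_mod (inI : S -> Prop) (s : seq S) : Prop :=
  forall c : 'I_(size s) -> K,
    inI (\sum_(k < size s) c k *: s`_k) -> forall k, c k = 0.

Definition is_qdim (inA inI : S -> Prop) (dg : nat * nat) (n : nat) : Prop :=
  (exists s : seq S, size s = n /\ (forall f, f \in s -> inA f /\ bihom dg f)
                     /\ indep_mod inI s) /\
  (forall s : seq S, (forall f, f \in s -> inA f /\ bihom dg f) ->
                     indep_mod inI s -> (size s <= n)%N).

Definition qdim (inA inI : S -> Prop) (dg : nat * nat) : nat :=
  epsilon (inhabits 0%N) (is_qdim inA inI dg).

Definition HF_kahler (inI : S -> Prop) (F : seq S) (i j : nat) : nat :=
  qdim (in_kahler_pre inI F) inI (i, j).

End Defs.

(* Main.v *)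
Require Import Defs.
From mathcomp Require Import all_boot all_order all_algebra.
From mathcomp Require Import mpoly.
From Stdlib Require Import ClassicalEpsilon Classical.
From mathcomp Require Import zify ring.

Import GRing.Theory.
Local Open Scope ring_scope.

Module Aux.
Set Implicit Arguments. Unset Strict Implicit. Unset Printing Implicit Defensive.

Section Gen.
Variable K : fieldType.
Local Notation S := (S K).

Definition is_ideal (P : S -> Prop) :=
  [/\ P 0, (forall f g, P f -> P g -> P (f + g)) & (forall a f, P f -> P (a * f))].

Section IdealLemmas.
Variable P : S -> Prop.
Hypothesis HP : is_ideal P.

Lemma id0 : P 0. Proof. by case: HP. Qed.
Lemma idD f g : P f -> P g -> P (f + g). Proof. by case: HP => _ H _; apply: H. Qed.
Lemma idMl a f : P f -> P (a * f). Proof. by case: HP => _ _ H; apply: H. Qed.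
Lemma idMr a f : P f -> P (f * a). Proof. by rewrite mulrC; apply: idMl. Qed.
Lemma idN f : P f -> P (- f).
Proof. by move=> Hf; rewrite -mulN1r; apply: idMl. Qed.
Lemma idB f g : P f -> P g -> P (f - g).
Proof. by move=> Hf Hg; apply: idD => //; apply: idN. Qed.
Lemma idZ c f : P f -> P (c *: f).
Proof. by move=> Hf; rewrite -mul_mpolyC; apply: idMl. Qed.
Lemma id_sum (I : Type) (r : seq I) (Pr : pred I) (F : I -> S) :
  (forall i, Pr i -> P (F i)) -> P (\sum_(i <- r | Pr i) F i).
Proof.
move=> H; elim/big_rec: _ => [|i x Hi Hx]; first exact: id0.
by apply: idD => //; apply: H.
Qed.
End IdealLemmas.

Lemma ideal_genP (gs : seq S) f :
  ideal_gen gs f <-> exists c : 'I_(size gs) -> S, f = \sum_(k < size gs) c k * gs`_k.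
Proof.
split=> [[cs [Hs ->]]|[c ->]].
  by exists (fun k => cs`_k).
exists (map c (enum 'I_(size gs))); rewrite size_map size_enum_ord; split=> //.
apply: eq_bigr => k _; rewrite (nth_map k) ?size_enum_ord //; congr (c _ * _).
by apply: val_inj; rewrite /= nth_enum_ord.
Qed.

Lemma ideal_gen_ideal (gs : seq S) : is_ideal (ideal_gen gs).
Proof.
split.
- by apply/ideal_genP; exists (fun _ => 0); rewrite big1 // => k _; rewrite mul0r.
- move=> f g /ideal_genP [c1 ->] /ideal_genP [c2 ->]; apply/ideal_genP.
  by exists (fun k => c1 k + c2 k); rewrite -big_split; apply: eq_bigr => k _; rewrite mulrDl.
- move=> a f /ideal_genP [c ->]; apply/ideal_genP; exists (fun k => a * c k).
  by rewrite mulr_sumr; apply: eq_bigr => k _; rewrite mulrA.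
Qed.

Lemma ideal_gen_mem (gs : seq S) g : g \in gs -> ideal_gen gs g.
Proof.
move=> Hg; apply/ideal_genP.
have Hi : (index g gs < size gs)%N by rewrite index_mem.
exists (fun k => if k == Ordinal Hi then 1 else 0).
rewrite (bigD1 (Ordinal Hi)) //= eqxx mul1r nth_index // big1 ?addr0 //.
by move=> k /negbTE ->; rewrite mul0r.
Qed.

Lemma ideal_gen_sub (gs : seq S) (P : S -> Prop) : is_ideal P -> (forall g, g \in gs -> P g) ->
  forall f, ideal_gen gs f -> P f.
Proof.
move=> HP Hg f /ideal_genP [c ->]; apply: id_sum => // k _; apply: idMl => //.
by apply: Hg; apply: mem_nth.
Qed.

Lemma is_ideal_inter (I : Type) (Ps : I -> S -> Prop) :
  (forall i, is_ideal (Ps i)) -> is_ideal (fun f => forall i, Ps i f).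
Proof.
move=> H; split.
- by move=> i; apply: id0.
- by move=> f g Hf Hg i; apply: idD.
- by move=> a f Hf i; apply: idMl.
Qed.

Definition paddn (a b : nat * nat) : nat * nat := ((a.1 + b.1)%N, (a.2 + b.2)%N).

Lemma bihomP d (f : S) : bihom d f <-> forall mo, f@_mo != 0 -> bideg mo = d.
Proof. by split=> H mo; [rewrite -mcoeff_msupp; apply: H | rewrite mcoeff_msupp; apply: H]. Qed.

Lemma bihom0 d : bihom d (0 : S).
Proof. by apply/bihomP=> mo; rewrite mcoeff0 eqxx. Qed.

Lemma bihomD d (f g : S) : bihom d f -> bihom d g -> bihom d (f + g).
Proof.
move=> /bihomP Hf /bihomP Hg; apply/bihomP=> mo; rewrite mcoeffD.
have [/Hf //|/negPn/eqP ->] := boolP (f@_mo != 0); rewrite add0r; exact: Hg.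
Qed.

Lemma bihomZ d c (f : S) : bihom d f -> bihom d (c *: f).
Proof.
move=> /bihomP Hf; apply/bihomP=> mo; rewrite mcoeffZ.
by have [->|/Hf //] := eqVneq (f@_mo) 0; rewrite mulr0 eqxx.
Qed.

Lemma bihomN d (f : S) : bihom d f -> bihom d (- f).
Proof. by move=> H; rewrite -scaleN1r; apply: bihomZ. Qed.

Lemma bihomB d (f g : S) : bihom d f -> bihom d g -> bihom d (f - g).
Proof. by move=> H1 H2; apply: bihomD => //; apply: bihomN. Qed.

Lemma bihom_sum d (I : Type) (r : seq I) (Pr : pred I) (F : I -> S) :
  (forall i, Pr i -> bihom d (F i)) -> bihom d (\sum_(i <- r | Pr i) F i).
Proof.
move=> H; elim/big_rec: _ => [|i x Hi Hx]; first exact: bihom0.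
by apply: bihomD => //; apply: H.
Qed.

Lemma bidegD (m1 m2 : 'X_{1..4}) : bideg (m1 + m2)%MM = paddn (bideg m1) (bideg m2).
Proof. by rewrite /bideg /paddn /= !mnmDE; congr pair; lia. Qed.

Lemma bihomM d1 d2 (f g : S) : bihom d1 f -> bihom d2 g -> bihom (paddn d1 d2) (f * g).
Proof.
move=> Hf Hg mo /msuppM_le /allpairsP [[m1 m2] /= [H1 H2 ->]].
by rewrite bidegD (Hf _ H1) (Hg _ H2).
Qed.

Lemma bihomX (mo : 'X_{1..4}) : bihom (bideg mo) ('X_[mo] : S).
Proof. by move=> m; rewrite msuppX inE => /eqP ->. Qed.

Lemma bihom1 : bihom (0%N, 0%N) (1 : S).
Proof. by rewrite -mpolyX0; have := @bihomX 0%MM; rewrite /bideg !mnm0E. Qed.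

Lemma bihom_exp d (f : S) k : bihom d f -> bihom ((k * d.1)%N, (k * d.2)%N) (f ^+ k).
Proof.
move=> Hf; elim: k => [|k IH]; first by rewrite expr0 !mul0n; exact: bihom1.
rewrite exprS; have := bihomM Hf IH; rewrite /paddn /=.
by rewrite !mulSn; apply.
Qed.

Lemma bidegU (i : 'I_4) : bideg (U_(i) : 'X_{1..4}) =
  (((i == vX0) + (i == vX1))%N, ((i == vY0) + (i == vY1))%N).
Proof. by rewrite /bideg !mnm1E. Qed.

Lemma bihomX0 : bihom (1%N, 0%N) (X0 K).
Proof.
have := @bihomX (U_(vX0))%MM; rewrite bidegU /X0.
by rewrite !eqxx -!val_eqE /= /vX0 /vX1 /vY0 /vY1 !inordK.
Qed.
Lemma bihomX1 : bihom (1%N, 0%N) (X1 K).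
Proof.
have := @bihomX (U_(vX1))%MM; rewrite bidegU /X1.
by rewrite !eqxx -!val_eqE /= /vX0 /vX1 /vY0 /vY1 !inordK.
Qed.
Lemma bihomY0 : bihom (0%N, 1%N) (Y0 K).
Proof.
have := @bihomX (U_(vY0))%MM; rewrite bidegU /Y0.
by rewrite !eqxx -!val_eqE /= /vX0 /vX1 /vY0 /vY1 !inordK.
Qed.
Lemma bihomY1 : bihom (0%N, 1%N) (Y1 K).
Proof.
have := @bihomX (U_(vY1))%MM; rewrite bidegU /Y1.
by rewrite !eqxx -!val_eqE /= /vX0 /vX1 /vY0 /vY1 !inordK.
Qed.

End Gen.

Section Comp.
Variable K : fieldType.
Local Notation S := (S K).

Definition bcomp (d : nat * nat) (f : S) : S :=
  \sum_(mo <- msupp f) (if bideg mo == d then f@_mo else 0) *: 'X_[mo].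

Lemma mcoeff_comp d f k : (bcomp d f)@_k = if bideg k == d then f@_k else 0.
Proof.
rewrite /bcomp raddf_sum /=.
under eq_bigr do rewrite mcoeffZ mcoeffX.
have [Hk|Hk] := boolP (k \in msupp f).
  rewrite (bigD1_seq k) //= ?msupp_uniq // eqxx mulr1 big1 ?addr0 //.
  by move=> mo /negbTE ->; rewrite mulr0.
rewrite big1_seq; last first.
  by move=> mo /= Hmo; case: (mo =P k) => [E|]; [by move: Hk; rewrite -E Hmo | rewrite mulr0].
by rewrite (memN_msupp_eq0 Hk); case: ifP.
Qed.

Lemma compD d f g : bcomp d (f + g) = bcomp d f + bcomp d g.
Proof. by apply/mpolyP => k; rewrite mcoeffD !mcoeff_comp mcoeffD; case: ifP; rewrite ?addr0. Qed.

Lemma compZ d c f : bcomp d (c *: f) = c *: bcomp d f.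
Proof. by apply/mpolyP => k; rewrite mcoeffZ !mcoeff_comp mcoeffZ; case: ifP; rewrite ?mulr0. Qed.

Lemma comp0 d : bcomp d 0 = 0.
Proof. by apply/mpolyP => k; rewrite mcoeff_comp mcoeff0; case: ifP. Qed.

Lemma comp_sum d (I : Type) (r : seq I) (F : I -> S) :
  bcomp d (\sum_(i <- r) F i) = \sum_(i <- r) bcomp d (F i).
Proof.
elim: r => [|x r IH]; first by rewrite !big_nil comp0.
by rewrite !big_cons compD IH.
Qed.

Lemma comp_bihom d e f : bihom e f -> bcomp d f = if e == d then f else 0.
Proof.
move=> /bihomP H; apply/mpolyP => k; rewrite mcoeff_comp.
case: (eqVneq e d) => [<-|ne].
  by case: eqP => // Hk; have [/H Hk'|/negPn/eqP] := boolP (f@_k != 0).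
rewrite mcoeff0; case: eqP => // Hk.
by have [/H Hk'|/negPn/eqP //] := boolP (f@_k != 0); move: ne; rewrite -Hk' Hk eqxx.
Qed.

Lemma bihom_comp d f : bihom d (bcomp d f).
Proof. by apply/bihomP => k; rewrite mcoeff_comp; case: (bideg k =P d) => // _; rewrite eqxx. Qed.

Lemma pair_arith (a b e1 e2 d1 d2 : nat) :
  ((a + e1, b + e2) == (d1, d2)) =
  ((e1 <= d1)%N && (e2 <= d2)%N) && ((a, b) == ((d1 - e1)%N, (d2 - e2)%N)).
Proof.
rewrite !xpair_eqE; apply/idP/idP.
  case/andP => /eqP H1 /eqP H2; apply/andP; split; apply/andP; split; apply/eqP || idtac; lia.
case/andP => /andP [h1 h2] /andP [/eqP H1 /eqP H2]; apply/andP; split; apply/eqP; lia.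
Qed.

Lemma comp_mul d e c G : bihom e G ->
  bcomp d (c * G) =
  (if ((e.1 <= d.1)%N && (e.2 <= d.2)%N) then bcomp ((d.1 - e.1)%N, (d.2 - e.2)%N) c else 0) * G.
Proof.
move=> HG; rewrite {1}(mpolyE c) mulr_suml comp_sum.
under eq_bigr do rewrite -scalerAl compZ (comp_bihom _ (bihomM (@bihomX K _) HG)).
case: ifP => Hc.
  rewrite [in RHS](mpolyE c) comp_sum mulr_suml; apply: eq_bigr => mo _.
  rewrite compZ (comp_bihom _ (@bihomX K _)) -scalerAl.
  case: d Hc => d1 d2 /= Hc; case: e HG Hc => e1 e2 HG /= Hc.
  case: (bideg mo) => a b; rewrite /paddn /= pair_arith Hc /=.
  by case: ifP => //; rewrite mul0r.
rewrite mul0r big1 // => mo _.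
case: d Hc => d1 d2 /= Hc; case: e HG Hc => e1 e2 HG /= Hc.
case: (bideg mo) => a b; rewrite /paddn /= pair_arith Hc /=.
by rewrite scaler0.
Qed.

Lemma ideal_gen_comp (gs : seq S) d f :
  (forall g, g \in gs -> exists e, bihom e g) -> ideal_gen gs f -> ideal_gen gs (bcomp d f).
Proof.
move=> Hg /ideal_genP [c ->]; rewrite comp_sum.
apply: id_sum; first exact: ideal_gen_ideal.
move=> k _; have [e He] := Hg _ (mem_nth 0 (ltn_ord k)).
rewrite (comp_mul _ _ He); apply: idMl; first exact: ideal_gen_ideal.
exact: ideal_gen_mem (mem_nth 0 (ltn_ord k)).
Qed.

End Comp.

Section Wp.
Variable K : fieldType.
Local Notation S := (S K).
Implicit Types (q r : K * K) (f g : S).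

Definition L1 (q : K * K) : S := lin_form q (X0 K) (X1 K).
Definition L2 (r : K * K) : S := lin_form r (Y0 K) (Y1 K).
Definition pt (q r : K * K) : 'I_4 -> K := fun i => nth 0 [:: q.1; q.2; r.1; r.2] i.

Lemma ev_X0 q r : (X0 K).@[pt q r] = q.1.
Proof. by rewrite /X0 mevalXU /pt /vX0 inordK. Qed.
Lemma ev_X1 q r : (X1 K).@[pt q r] = q.2.
Proof. by rewrite /X1 mevalXU /pt /vX1 inordK. Qed.
Lemma ev_Y0 q r : (Y0 K).@[pt q r] = r.1.
Proof. by rewrite /Y0 mevalXU /pt /vY0 inordK. Qed.
Lemma ev_Y1 q r : (Y1 K).@[pt q r] = r.2.
Proof. by rewrite /Y1 mevalXU /pt /vY1 inordK. Qed.

Lemma ev_L1 q' q r : (L1 q').@[pt q r] = q'.2 * q.1 - q'.1 * q.2.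
Proof. by rewrite /L1 /lin_form mevalB !mevalZ ev_X0 ev_X1. Qed.
Lemma ev_L2 r' q r : (L2 r').@[pt q r] = r'.2 * r.1 - r'.1 * r.2.
Proof. by rewrite /L2 /lin_form mevalB !mevalZ ev_Y0 ev_Y1. Qed.

Lemma mderiv1 (i : 'I_4) : mderiv i (1 : S) = 0.
Proof. by rewrite -mpolyC1 mderivC. Qed.

Lemma dXU (i j : 'I_4) : mderiv i ('X_j : S) = (i == j)%:R.
Proof.
rewrite mderivX mnm1E eq_sym; case: eqP => [->|_]; last by rewrite scale0r.
have -> : (U_(j) - U_(j))%MM = 0%MM by apply/mnmP => k; rewrite mnmBE mnm0E subnn.
by rewrite mpolyX0 scale1r.
Qed.

Lemma neq_v : ((vX0 != vX1) && (vX0 != vY0) && (vX0 != vY1)) && ((vX1 != vY0) && (vX1 != vY1) && (vY0 != vY1)).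
Proof. by rewrite -!val_eqE /= /vX0 /vX1 /vY0 /vY1 !inordK. Qed.

Lemma dX1_L1 q : mderiv vX1 (L1 q) = - (q.1 *: 1).
Proof.
case/andP: neq_v => /andP [/andP [h1 h2] h3] /andP [/andP [h4 h5] h6].
by rewrite /L1 /lin_form mderivB !mderivZ /X0 /X1 !dXU eqxx eq_sym (negbTE h1) scaler0 sub0r.
Qed.
Lemma dY1_L1 q : mderiv vY1 (L1 q) = 0.
Proof.
case/andP: neq_v => /andP [/andP [h1 h2] h3] /andP [/andP [h4 h5] h6].
by rewrite /L1 /lin_form mderivB !mderivZ /X0 /X1 !dXU eq_sym (negbTE h3) eq_sym (negbTE h5) !scaler0 subr0.
Qed.
Lemma dX1_L2 r : mderiv vX1 (L2 r) = 0.
Proof.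
case/andP: neq_v => /andP [/andP [h1 h2] h3] /andP [/andP [h4 h5] h6].
by rewrite /L2 /lin_form mderivB !mderivZ /Y0 /Y1 !dXU (negbTE h4) (negbTE h5) !scaler0 subr0.
Qed.
Lemma dY1_L2 r : mderiv vY1 (L2 r) = - (r.1 *: 1).
Proof.
case/andP: neq_v => /andP [/andP [h1 h2] h3] /andP [/andP [h4 h5] h6].
by rewrite /L2 /lin_form mderivB !mderivZ /Y0 /Y1 !dXU eqxx eq_sym (negbTE h6) scaler0 sub0r.
Qed.

Lemma mderiv_sum i (I : Type) (rr : seq I) (F : I -> S) :
  mderiv i (\sum_(x <- rr) F x) = \sum_(x <- rr) mderiv i (F x).
Proof.
elim: rr => [|x rr IH]; first by rewrite !big_nil mderiv0.
by rewrite !big_cons mderivD IH.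
Qed.

Lemma mderiv_exp i (L : S) n :
  mderiv i (L ^+ n.+1) = L ^+ n * (n.+1%:R * mderiv i L).
Proof.
elim: n => [|n IH]; first by rewrite expr1 expr0 mul1r mul1r.
rewrite exprS mderivM IH exprS.
rewrite [in RHS]mulrS mulrDl mul1r mulrDr; congr (_ + _); first by rewrite mulrC.
by rewrite mulrA.
Qed.

Lemma wp_ideal q r m : is_ideal (in_wp_pow q r m).
Proof. exact: ideal_gen_ideal. Qed.

Lemma wp_gensP q r m g :
  reflect (exists2 k, (k <= m)%N & g = L1 q ^+ k * L2 r ^+ (m - k)) (g \in wp_pow_gens q r m).
Proof.
apply: (iffP mapP) => [[k]|[k Hk ->]].
  by rewrite mem_iota add0n ltnS => /andP [_ Hk] ->; exists k.
by exists k => //; rewrite mem_iota add0n ltnS Hk.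
Qed.

Lemma wp_gen q r m k : (k <= m)%N -> in_wp_pow q r m (L1 q ^+ k * L2 r ^+ (m - k)).
Proof. by move=> Hk; apply: ideal_gen_mem; apply/wp_gensP; exists k. Qed.

Lemma preim_ideal (P : S -> Prop) x : is_ideal P -> is_ideal (fun g => P (x * g)).
Proof.
move=> HP; split.
- by rewrite mulr0; apply: id0.
- by move=> f g Hf Hg; rewrite mulrDr; apply: idD.
- by move=> a f Hf; rewrite mulrCA; apply: idMl.
Qed.

Lemma wp_sub (P : S -> Prop) q r m : is_ideal P ->
  (forall k, (k <= m)%N -> P (L1 q ^+ k * L2 r ^+ (m - k))) ->
  forall f, in_wp_pow q r m f -> P f.
Proof.
move=> HP H f Hf; apply: (ideal_gen_sub HP) Hf => g /wp_gensP [k Hk ->]; exact: H.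
Qed.

Lemma wp_mul q r a b f g :
  in_wp_pow q r a f -> in_wp_pow q r b g -> in_wp_pow q r (a + b) (f * g).
Proof.
move=> Hf Hg.
have H1 : forall k, (k <= a)%N -> in_wp_pow q r (a + b) (L1 q ^+ k * L2 r ^+ (a - k) * g).
  move=> k Hk; apply: (wp_sub (preim_ideal _ (wp_ideal q r (a + b)))) Hg => l Hl.
  have -> : L1 q ^+ k * L2 r ^+ (a - k) * (L1 q ^+ l * L2 r ^+ (b - l)) =
            L1 q ^+ (k + l) * L2 r ^+ (a + b - (k + l)).
    rewrite !exprD mulrACA; congr (_ * _); rewrite -exprD; congr (_ ^+ _); lia.
  by apply: wp_gen; lia.
rewrite mulrC; apply: (wp_sub (preim_ideal _ (wp_ideal q r (a + b)))) Hf => k Hk.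
by rewrite mulrC; apply: H1.
Qed.

Lemma wp_S q r n f : in_wp_pow q r n.+1 f -> in_wp_pow q r n f.
Proof.
apply: wp_sub; first exact: wp_ideal.
move=> [|k] Hk.
  by rewrite expr0 mul1r subn0 exprS; apply: idMl; first exact: wp_ideal;
     have := wp_gen q r (leq0n n); rewrite expr0 mul1r subn0.
rewrite exprS -mulrA; apply: idMl; first exact: wp_ideal.
by rewrite subSS; apply: wp_gen.
Qed.

Lemma wp_le q r a b f : (b <= a)%N -> in_wp_pow q r a f -> in_wp_pow q r b f.
Proof.
move=> Hba; elim: a Hba f => [|a IH] Hba f Hf.
  by move: Hba; rewrite leqn0 => /eqP ->.
case: (ltngtP b a.+1) Hba => // [Hlt|->] _ //.
by apply: IH; first by []; apply: wp_S.
Qed.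

Lemma wp0 q r f : in_wp_pow q r 0 f.
Proof.
rewrite -[f]mulr1; apply: idMl; first exact: wp_ideal.
by have := wp_gen q r (leqnn 0); rewrite expr0 mul1r subnn expr0.
Qed.

Lemma wp_deriv q r m i f : in_wp_pow q r m f -> in_wp_pow q r m.-1 (mderiv i f).
Proof.
move=> /ideal_genP [c ->]; rewrite mderiv_sum; apply: id_sum; first exact: wp_ideal.
move=> k _; have /wp_gensP [kk Hkk ->] := mem_nth 0 (ltn_ord k).
rewrite mderivM; apply: idD; first exact: wp_ideal.
  apply: idMl; first exact: wp_ideal.
  by apply: (wp_le (leq_pred m)); apply: wp_gen.
apply: idMl; first exact: wp_ideal.
rewrite mderivM; apply: idD; first exact: wp_ideal.
  case: kk Hkk => [|k'] Hk.
    by rewrite expr0 mderiv1; rewrite mul0r; apply: id0; exact: wp_ideal.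
  rewrite mderiv_exp mulrAC; apply: idMr; first exact: wp_ideal.
  have -> : (m - k'.+1)%N = (m.-1 - k')%N by lia.
  by apply: wp_gen; lia.
case E: (m - kk)%N => [|j].
  by rewrite expr0 mderiv1 mulr0; apply: id0; exact: wp_ideal.
rewrite mderiv_exp mulrA; apply: idMr; first exact: wp_ideal.
have -> : j = (m.-1 - kk)%N by lia.
by apply: wp_gen; lia.
Qed.

Lemma wp_ev q r m f : (1 <= m)%N -> in_wp_pow q r m f -> f.@[pt q r] = 0.
Proof.
move=> Hm; apply: (@wp_sub (fun f => f.@[pt q r] = 0)).
  split; [by rewrite meval0 | by move=> f1 g1 H1 H2; rewrite mevalD H1 H2 addr0
         | by move=> a f1 H1; rewrite mevalM H1 mulr0].
move=> k Hk; rewrite mevalM !rmorphXn /= ev_L1 ev_L2 !(mulrC _.1) !(mulrC _.2).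
rewrite !subrr !expr0n; case: k Hk => [|k] Hk /=; last by rewrite mul0r.
by rewrite subn0 mul1r; case: m Hm {Hk}.
Qed.

End Wp.

Section Null.
Variable K : fieldType.
Local Notation S := (S K).
Implicit Types (q r : K * K) (f g : S).

Lemma ord4_cases (k : 'I_4) : [\/ k = vX0, k = vX1, k = vY0 | k = vY1].
Proof.
case: k => [[|[|[|[|k]]]] Hk] //.
- by apply: Or41; apply: val_inj; rewrite /= /vX0 inordK.
- by apply: Or42; apply: val_inj; rewrite /= /vX1 inordK.
- by apply: Or43; apply: val_inj; rewrite /= /vY0 inordK.
- by apply: Or44; apply: val_inj; rewrite /= /vY1 inordK.
Qed.

Lemma monoE (mo : 'X_{1..4}) :
  'X_[mo] = X0 K ^+ (mo vX0) * X1 K ^+ (mo vX1) * Y0 K ^+ (mo vY0) * Y1 K ^+ (mo vY1).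
Proof.
have E : mo = (U_(vX0) *+ mo vX0 + U_(vX1) *+ mo vX1 + U_(vY0) *+ mo vY0 + U_(vY1) *+ mo vY1)%MM.
  apply/mnmP => k; rewrite !mnmDE !mulmnE !mnm1E.
  case/andP: neq_v => /andP [/andP [h1 h2] h3] /andP [/andP [h4 h5] h6].
  case: (ord4_cases k) => ->; rewrite ?eqxx ?(negbTE h1) ?(negbTE h2) ?(negbTE h3)
    ?(negbTE h4) ?(negbTE h5) ?(negbTE h6) ?(eq_sym vX1 vX0) ?(negbTE h1)
    ?(eq_sym vY0 vX0) ?(negbTE h2) ?(eq_sym vY1 vX0) ?(negbTE h3)
    ?(eq_sym vY0 vX1) ?(negbTE h4) ?(eq_sym vY1 vX1) ?(negbTE h5)
    ?(eq_sym vY1 vY0) ?(negbTE h6) /=; lia.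
rewrite {1}E !mpolyXD -!mpolyXn; by [].
Qed.


Lemma cong_exp (P : S -> Prop) x y n : is_ideal P -> P (x - y) -> P (x ^+ n - y ^+ n).
Proof.
move=> HP Hxy; elim: n => [|n IH]; first by rewrite !expr0 subrr; apply: id0.
have -> : x ^+ n.+1 - y ^+ n.+1 = x * (x ^+ n - y ^+ n) + (x - y) * y ^+ n.
  by rewrite !exprS; ring.
by apply: idD => //; [apply: idMl | apply: idMr].
Qed.

Lemma mono_cong q r (mo : 'X_{1..4}) :
  in_wp_pow q r 1
   ((q.1 ^+ (mo vX0 + mo vX1) * r.1 ^+ (mo vY0 + mo vY1)) *: 'X_[mo]
    - ('X_[mo]).@[pt q r] *: (X0 K ^+ (mo vX0 + mo vX1) * Y0 K ^+ (mo vY0 + mo vY1))).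
Proof.
have HJ := wp_ideal q r 1.
rewrite monoE !mevalM !rmorphXn /= ev_X0 ev_X1 ev_Y0 ev_Y1.
move: (mo vX0) (mo vX1) (mo vY0) (mo vY1) => a b c d.
set A := (q.1)%:MP * X1 K; set A' := (q.2)%:MP * X0 K.
set B := (r.1)%:MP * Y1 K; set B' := (r.2)%:MP * Y0 K.
have HA : in_wp_pow q r 1 (A - A').
  have -> : A - A' = - L1 q by rewrite /A /A' /L1 /lin_form !mul_mpolyC opprB.
  by apply: idN => //; have := wp_gen q r (leqnn 1); rewrite expr1 subnn expr0 mulr1.
have HB : in_wp_pow q r 1 (B - B').
  have -> : B - B' = - L2 r by rewrite /B /B' /L2 /lin_form !mul_mpolyC opprB.
  by apply: idN => //; have := wp_gen q r (leq0n 1); rewrite expr0 subn0 expr1 mul1r.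
have E : forall (k : K) (p : S), k *: p = k%:MP * p by move=> k p; rewrite mul_mpolyC.
rewrite !E.
have -> : (q.1 ^+ (a + b) * r.1 ^+ (c + d))%:MP * (X0 K ^+ a * X1 K ^+ b * Y0 K ^+ c * Y1 K ^+ d)
   - (q.1 ^+ a * q.2 ^+ b * r.1 ^+ c * r.2 ^+ d)%:MP * (X0 K ^+ (a + b) * Y0 K ^+ (c + d))
   = ((q.1 ^+ a * r.1 ^+ c)%:MP * X0 K ^+ a * Y0 K ^+ c) * (A ^+ b * B ^+ d - A' ^+ b * B' ^+ d).
  rewrite /A /A' /B /B' !exprMn !exprD !rmorphM !rmorphXn /=; ring.
apply: idMl => //.
have -> : A ^+ b * B ^+ d - A' ^+ b * B' ^+ d = (A ^+ b - A' ^+ b) * B ^+ d + A' ^+ b * (B ^+ d - B' ^+ d) by ring.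
by apply: idD => //; [apply: idMr | apply: idMl] => //; apply: (@cong_exp (in_wp_pow q r 1)).
Qed.

Lemma null_pt q r i j f : q.1 != 0 -> r.1 != 0 -> bihom (i, j) f ->
  f.@[pt q r] = 0 -> in_wp_pow q r 1 f.
Proof.
move=> Hq Hr Hf Hev; have HJ := wp_ideal q r 1.
set c := q.1 ^+ i * r.1 ^+ j.
have Hc : c != 0 by rewrite mulf_neq0 // expf_neq0.
have H : in_wp_pow q r 1 (c *: f - f.@[pt q r] *: (X0 K ^+ i * Y0 K ^+ j)).
  rewrite [X in c *: X](mpolyE f) scaler_sumr mevalE scaler_suml -sumrB big_seq.
  apply: id_sum => // mo Hmo.
  have := mono_cong q r mo; have := Hf _ Hmo; rewrite /bideg => -[-> ->].
  rewrite mevalX => Hm.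
  have -> : c *: (f@_mo *: 'X_[mo]) - (f@_mo * \prod_i pt q r i ^+ mo i) *: (X0 K ^+ i * Y0 K ^+ j)
     = f@_mo *: (c *: 'X_[mo] - (\prod_i pt q r i ^+ mo i) *: (X0 K ^+ i * Y0 K ^+ j)).
    by rewrite scalerBr !scalerA mulrC.
  by apply: idZ.
move: H; rewrite Hev scale0r subr0 => H.
by rewrite -[f]scale1r -(mulVf Hc) -scalerA; apply: idZ.
Qed.

End Null.

Section Main.
Variable K : fieldType.
Local Notation S := (S K).
Variables (r t : nat) (Q : 'I_r -> K * K) (R : 'I_t -> K * K).
Hypotheses (HQ : distinct_P1 Q) (HR : distinct_P1 R).
Variables (D : {set 'I_r * 'I_t}) (m : 'I_r -> 'I_t -> nat).
Hypothesis (Hm : forall p, p \in D -> (1 <= m p.1 p.2)%N).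
Hypothesis (Hreg : regular_x0_y0 (in_IY Q R D m)).

Local Notation I := (in_IY Q R D m).
Local Notation pp := ('I_r * 'I_t)%type.
Definition qq (p : pp) := Q p.1.
Definition rr (p : pp) := R p.2.
Definition mm (p : pp) := m p.1 p.2.
Definition PP (p : pp) := pt (qq p) (rr p).
Definition Wp (p : pp) f := in_wp_pow (qq p) (rr p) (mm p) f.

Lemma I_ideal : is_ideal I.
Proof.
split.
- by move=> p _; apply: id0; apply: wp_ideal.
- by move=> f g Hf Hg p Hp; apply: idD; [apply: wp_ideal | apply: Hf | apply: Hg].
- by move=> a f Hf p Hp; apply: idMl; [apply: wp_ideal | apply: Hf].
Qed.

Lemma I_ev p f : p \in D -> I f -> f.@[PP p] = 0.
Proof. by move=> Hp Hf; apply: (wp_ev (Hm Hp)); apply: Hf. Qed.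

Lemma bihom_L1 (q : K * K) : bihom (1%N, 0%N) (L1 q).
Proof. by apply: bihomB; apply: bihomZ; [apply: bihomX0 | apply: bihomX1]. Qed.
Lemma bihom_L2 (q : K * K) : bihom (0%N, 1%N) (L2 q).
Proof. by apply: bihomB; apply: bihomZ; [apply: bihomY0 | apply: bihomY1]. Qed.

Lemma bihomM' d1 d2 d (f g : S) : bihom d1 f -> bihom d2 g -> d = paddn d1 d2 -> bihom d (f * g).
Proof. by move=> H1 H2 ->; apply: bihomM. Qed.

Lemma bihom_gen (q r' : K * K) k l : bihom (k, l) (L1 q ^+ k * L2 r' ^+ l).
Proof.
have H1 := bihom_exp (k:=k) ((bihom_L1 (q:=q))); have H2 := bihom_exp (k:=l) (bihom_L2 (q:=r')).
by have := bihomM H1 H2; rewrite /paddn /= !muln1 !muln0 addn0 add0n.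
Qed.

Lemma I_comp d f : I f -> I (bcomp d f).
Proof.
move=> Hf p Hp; apply: ideal_gen_comp; last exact: Hf p Hp.
by move=> g /wp_gensP [k Hk ->]; eexists; apply: bihom_gen.
Qed.


Definition Msep (p' p : pp) : S := if p'.1 != p.1 then L1 (qq p') else L2 (rr p').
Definition Wsep (p : pp) : S := \prod_(p' in D | p' != p) Msep p' p ^+ mm p'.

Lemma Msep_wp p' p k : in_wp_pow (qq p') (rr p') k (Msep p' p ^+ k).
Proof.
rewrite /Msep; case: ifP => _.
  by have := wp_gen (qq p') (rr p') (leqnn k); rewrite subnn expr0 mulr1.
by have := wp_gen (qq p') (rr p') (leq0n k); rewrite subn0 expr0 mul1r.
Qed.

Lemma Msep_ev p' p : p' != p -> (Msep p' p).@[PP p] != 0.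
Proof.
move=> Hne; rewrite /Msep /PP; case: ifP => [H1|/negbFE/eqP H1].
  rewrite ev_L1 subr_eq0 eq_sym.
  by case: HQ => _ /(_ _ _ H1).
have H2 : p'.2 != p.2.
  move: Hne H1; case: p' => a b; case: p => c d /= Hne H1.
  by apply: contra Hne => /eqP H2; rewrite H1 H2.
rewrite ev_L2 subr_eq0 eq_sym.
by case: HR => _ /(_ _ _ H2).
Qed.

Lemma Msep_bihom p' p : exists d, bihom d (Msep p' p).
Proof. by rewrite /Msep; case: ifP => _; eexists; [apply: bihom_L1 | apply: bihom_L2]. Qed.

Lemma Wsep_in p p' : p' \in D -> p' != p -> Wp p' (Wsep p).
Proof.
move=> Hp' Hne; rewrite /Wsep (bigD1 p') /=; last by rewrite Hp' Hne.
by apply: idMr; [apply: wp_ideal | apply: Msep_wp].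
Qed.

Lemma Wsep_ev_nz p : (Wsep p).@[PP p] != 0.
Proof.
rewrite /Wsep rmorph_prod /=; apply/prodf_neq0 => p' /andP [_ Hne].
by rewrite rmorphXn /= expf_neq0 // Msep_ev.
Qed.

Lemma Wsep_ev0 p p' : p' \in D -> p' != p -> (Wsep p).@[PP p'] = 0.
Proof. by move=> Hp' Hne; apply: (wp_ev (Hm Hp')); apply: Wsep_in. Qed.

Lemma Wsep_bihom p : exists d, bihom d (Wsep p).
Proof.
rewrite /Wsep; apply: (big_ind (fun f : S => exists d, bihom d f)).
- by exists (0%N, 0%N); apply: bihom1.
- by move=> f g [d1 H1] [d2 H2]; exists (paddn d1 d2); apply: bihomM.
- move=> p' _; have [d Hd] := Msep_bihom p' p.
  by eexists; apply: (bihom_exp (k:=mm p') Hd).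
Qed.


Lemma Y0_nzd i j f : bihom (i, j) f -> I (Y0 K * f) -> I f.
Proof.
case: Hreg => H1 [H2 _].
elim: i f => [|i IH] f Hf HY.
- have [g [h [Efg Hg]]] : exists g h, f = g + X0 K * h /\ I g.
    by apply: H2; exists (Y0 K * f), 0; rewrite mulr0 addr0.
  have -> : f = bcomp (0%N, j) f by rewrite (comp_bihom _ Hf) eqxx.
  rewrite Efg compD [X0 K * h]mulrC (comp_mul _ _ (@bihomX0 K)) /= mul0r addr0.
  exact: I_comp.
- have [g [h [Efg Hg]]] : exists g h, f = g + X0 K * h /\ I g.
    by apply: H2; exists (Y0 K * f), 0; rewrite mulr0 addr0.
  have Ef : f = bcomp (i.+1, j) g + bcomp (i, j) h * X0 K.
    have -> : f = bcomp (i.+1, j) f by rewrite (comp_bihom _ Hf) eqxx.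
    rewrite Efg compD [X0 K * h]mulrC.
    by rewrite (comp_mul _ _ (@bihomX0 K)) /= subn0 subn1.
  have Hg' := I_comp (i.+1, j) Hg.
  have Hh : I (bcomp (i, j) h).
    apply: IH; first exact: bihom_comp.
    apply: H1.
    have -> : X0 K * (Y0 K * bcomp (i, j) h) = Y0 K * f - Y0 K * bcomp (i.+1, j) g.
      by rewrite Ef; ring.
    by apply: (idB I_ideal) => //; apply: (idMl I_ideal).
  by rewrite Ef; apply: (idD I_ideal) => //; apply: (idMr I_ideal).
Qed.

Definition hv (p : pp) (vv : 'I_4) : 'I_4 -> {poly K} :=
  fun i => if i == vv then 'X else (PP p i)%:P.
Definition phi (p : pp) (vv : 'I_4) (f : S) : {poly K} := mmap (@polyC K) (hv p vv) f.

Lemma phiM p vv f g : phi p vv (f * g) = phi p vv f * phi p vv g.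
Proof. by rewrite /phi rmorphM. Qed.
Lemma phiB p vv f g : phi p vv (f - g) = phi p vv f - phi p vv g.
Proof. by rewrite /phi rmorphB. Qed.
Lemma phiXn p vv f k : phi p vv (f ^+ k) = phi p vv f ^+ k.
Proof. by rewrite /phi rmorphXn. Qed.
Lemma phiZ p vv c f : phi p vv (c *: f) = c%:P * phi p vv f.
Proof. by rewrite /phi mmapZ. Qed.
Lemma phiX p vv (i : 'I_4) : phi p vv ('X_i) = hv p vv i.
Proof. by rewrite /phi mmapX mmap1U. Qed.

Lemma phi_ev p vv f : PP p vv = 0 -> (phi p vv f).[0] = f.@[PP p].
Proof.
move=> H0; rewrite /phi /mmap mevalE horner_sum; apply: eq_bigr => mo _.
rewrite hornerCM /mmap1 horner_prod; congr (_ * _); apply: eq_bigr => i _.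
rewrite horner_exp /hv; case: eqP => [->|_]; first by rewrite hornerX H0.
by rewrite hornerC.
Qed.

Lemma val_wp p vv g k : 'X %| phi p vv (L1 (qq p)) -> 'X %| phi p vv (L2 (rr p)) ->
  in_wp_pow (qq p) (rr p) k g -> 'X ^+ k %| phi p vv g.
Proof.
move=> D1 D2; apply: (@wp_sub _ (fun g => 'X ^+ k %| phi p vv g)).
  split; first by rewrite /phi rmorph0 dvdp0.
  - by move=> f1 g1 E1 E2; rewrite /phi rmorphD dvdp_add.
  - by move=> a f1 E1; rewrite phiM dvdp_mull.
move=> l Hl; rewrite phiM !phiXn -(subnKC Hl) exprD subnKC // dvdp_mul //;
  exact: dvdp_exp2r.
Qed.

Lemma val_contra p vv (L : S) (c : K) : p \in D -> PP p vv = 0 -> c != 0 ->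
  phi p vv L = c%:P * 'X -> 'X %| phi p vv (L1 (qq p)) -> 'X %| phi p vv (L2 (rr p)) ->
  I (Wsep p * L ^+ (mm p).-1) -> False.
Proof.
move=> Hp H0 Hc EL D1 D2 HI.
have := val_wp D1 D2 (HI p Hp); rewrite phiM phiXn EL.
have := Hm Hp; rewrite -/(mm p); case: (mm p) => // n _ /=.
move=> Hd.
have E1 : ('X : {poly K}) ^+ n.+1 = 'X ^+ n * 'X by rewrite exprSr.
have E2 : phi p vv (Wsep p) * (c%:P * 'X) ^+ n = ('X : {poly K}) ^+ n * ((c ^+ n)%:P * phi p vv (Wsep p)).
  by rewrite exprMn rmorphXn /=; ring.
move: Hd; rewrite E1 E2 dvdp_mul2l; last by rewrite expf_neq0 // polyX_eq0.
rewrite -[X in X %| _]subr0 -polyC0 -root_factor_theorem.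
rewrite /root hornerM hornerC phi_ev // mulf_eq0 expf_eq0 (negbTE Hc) andbF /=.
by rewrite (negbTE (Wsep_ev_nz p)).
Qed.


Lemma I_W p g : Wp p (Wsep p * g) -> I (Wsep p * g).
Proof.
move=> Hpg p' Hp'; case: (eqVneq p' p) => [->|Hne] //.
by apply: idMr; [apply: wp_ideal | apply: Wsep_in].
Qed.

Lemma PP_X0 p : PP p vX0 = (qq p).1. Proof. by rewrite /PP /pt /vX0 inordK. Qed.
Lemma PP_X1 p : PP p vX1 = (qq p).2. Proof. by rewrite /PP /pt /vX1 inordK. Qed.
Lemma PP_Y0 p : PP p vY0 = (rr p).1. Proof. by rewrite /PP /pt /vY0 inordK. Qed.
Lemma PP_Y1 p : PP p vY1 = (rr p).2. Proof. by rewrite /PP /pt /vY1 inordK. Qed.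

Lemma nz_pair (a : K * K) : a != (0, 0) -> a.1 = 0 -> a.2 != 0.
Proof. by case: a => x y /= H Hx; apply: contraNneq H => Hy; rewrite Hx Hy. Qed.

Lemma q1_nz p : p \in D -> (qq p).1 != 0.
Proof.
move=> Hp; apply/negP => /eqP Hq1.
have Hq2 : (qq p).2 != 0 by case: HQ => H _; apply: nz_pair (H p.1) Hq1.
case/andP: neq_v => /andP [/andP [h1 h2] h3] /andP [/andP [h4 h5] h6].
have EL : phi p vX0 (L1 (qq p)) = ((qq p).2)%:P * 'X.
  rewrite /L1 /lin_form phiB !phiZ /X0 /X1 !phiX /hv eqxx eq_sym (negbTE h1).
  by rewrite Hq1 polyC0 mul0r subr0.
have EL2 : phi p vX0 (L2 (rr p)) = 0.
  rewrite /L2 /lin_form phiB !phiZ /Y0 /Y1 !phiX /hv eq_sym (negbTE h2) eq_sym (negbTE h3).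
  by rewrite PP_Y0 PP_Y1 -!rmorphM /= mulrC subrr.
apply: (@val_contra p vX0 (L1 (qq p)) ((qq p).2) Hp _ Hq2 EL).
- by rewrite PP_X0.
- by rewrite EL dvdp_mull.
- by rewrite EL2 dvdp0.
case: Hreg => H1 _; apply: H1; have := Hm Hp; rewrite -/(mm p).
case E: (mm p) => [|n] // _ /=.
have EX0 : L1 (qq p) = (qq p).2%:MP * X0 K.
  by rewrite /L1 /lin_form Hq1 scale0r subr0 mul_mpolyC.
set c := (qq p).2 in Hq2 EX0 *.
have -> : X0 K * (Wsep p * L1 (qq p) ^+ n) = Wsep p * ((c^-1)%:MP * (L1 (qq p) ^+ n.+1 * L2 (rr p) ^+ 0)).
  rewrite EX0 expr0 mulr1.
  have -> : (c^-1)%:MP * ((c%:MP * X0 K) ^+ n.+1) = ((c^-1)%:MP * c%:MP) * (X0 K * (c%:MP * X0 K) ^+ n).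
    by rewrite exprS; ring.
  by rewrite -rmorphM /= mulVf // rmorph1 mul1r; ring.
apply: I_W; apply: idMl; first exact: wp_ideal.
apply: idMl; first exact: wp_ideal.
have := wp_gen (qq p) (rr p) (leqnn (mm p)); rewrite subnn /Wp E; exact.
Qed.

Lemma r1_nz p : p \in D -> (rr p).1 != 0.
Proof.
move=> Hp; apply/negP => /eqP Hr1.
have Hr2 : (rr p).2 != 0 by case: HR => H _; apply: nz_pair (H p.2) Hr1.
case/andP: neq_v => /andP [/andP [h1 h2] h3] /andP [/andP [h4 h5] h6].
have EL : phi p vY0 (L2 (rr p)) = ((rr p).2)%:P * 'X.
  rewrite /L2 /lin_form phiB !phiZ /Y0 /Y1 !phiX /hv eqxx eq_sym (negbTE h6).
  by rewrite Hr1 polyC0 mul0r subr0.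
have EL1 : phi p vY0 (L1 (qq p)) = 0.
  rewrite /L1 /lin_form phiB !phiZ /X0 /X1 !phiX /hv (negbTE h2) (negbTE h4).
  by rewrite PP_X0 PP_X1 -!rmorphM /= mulrC subrr.
apply: (@val_contra p vY0 (L2 (rr p)) ((rr p).2) Hp _ Hr2 EL).
- by rewrite PP_Y0.
- by rewrite EL1 dvdp0.
- by rewrite EL dvdp_mull.
have [[a b] Hab] := Wsep_bihom p.
have Hb : bihom (a, (b + (mm p).-1)%N) (Wsep p * L2 (rr p) ^+ (mm p).-1).
  have := bihomM Hab (bihom_exp (k:=(mm p).-1) (bihom_L2 (q:=rr p))).
  by rewrite /paddn /= muln0 muln1 addn0.
apply: (Y0_nzd Hb).
have := Hm Hp; rewrite -/(mm p).
case E: (mm p) => [|n] // _ /=.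
have EY0 : L2 (rr p) = (rr p).2%:MP * Y0 K.
  by rewrite /L2 /lin_form Hr1 scale0r subr0 mul_mpolyC.
set c := (rr p).2 in Hr2 EY0 *.
have -> : Y0 K * (Wsep p * L2 (rr p) ^+ n) = Wsep p * ((c^-1)%:MP * (L1 (qq p) ^+ 0 * L2 (rr p) ^+ n.+1)).
  rewrite EY0 expr0 mul1r.
  have -> : (c^-1)%:MP * ((c%:MP * Y0 K) ^+ n.+1) = ((c^-1)%:MP * c%:MP) * (Y0 K * (c%:MP * Y0 K) ^+ n).
    by rewrite exprS; ring.
  by rewrite -rmorphM /= mulVf // rmorph1 mul1r; ring.
apply: I_W; apply: idMl; first exact: wp_ideal.
apply: idMl; first exact: wp_ideal.
have := wp_gen (qq p) (rr p) (leq0n (mm p)); rewrite subn0 /Wp E; exact.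
Qed.


Variable F : seq S.
Hypothesis HFgen : forall f, I f <-> ideal_gen F f.

Definition minor (f g : S) : S :=
  mderiv vX1 f * mderiv vY1 g - mderiv vX1 g * mderiv vY1 f.
Local Notation A := (in_kahler_pre I F).

Lemma A_ideal : is_ideal A.
Proof.
have HI := I_ideal; have HM := ideal_gen_ideal (kahler_minors F).
split.
- by exists 0, 0; rewrite addr0; split => //; split; [exact: (id0 HI) | exact: (id0 HM)].
- move=> f g [g1 [h1 [-> [Hg1 Hh1]]]] [g2 [h2 [-> [Hg2 Hh2]]]].
  exists (g1 + g2), (h1 + h2); split; first by rewrite addrACA.
  by split; [exact: (idD HI) | exact: (idD HM)].
- move=> a f [g1 [h1 [-> [Hg1 Hh1]]]]; exists (a * g1), (a * h1).
  by split; [rewrite mulrDr | split; [exact: (idMl HI) | exact: (idMl HM)]].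
Qed.

Lemma I_A f : I f -> A f.
Proof. by move=> Hf; exists f, 0; rewrite addr0; split => //; split => //; apply: id0; apply: ideal_gen_ideal. Qed.

Lemma deriv_dec f : I f -> exists c : 'I_(size F) -> S,
  forall i, exists iota, I iota /\ mderiv i f = iota + \sum_k c k * mderiv i F`_k.
Proof.
move=> /HFgen /ideal_genP [c ->]; exists c => i.
exists (\sum_k mderiv i (c k) * F`_k); split.
  apply/HFgen; apply: (id_sum (ideal_gen_ideal F)).
  by move=> k _; apply: idMl; [exact: ideal_gen_ideal | apply: ideal_gen_mem; apply: mem_nth].
by rewrite mderiv_sum -big_split /=; apply: eq_bigr => k _; rewrite mderivM.
Qed.

Lemma sum_minor n (c d X Y : 'I_n -> S) :
  (\sum_a c a * X a) * (\sum_b d b * Y b) - (\sum_b d b * X b) * (\sum_a c a * Y a) =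
  \sum_a \sum_b (c a * d b) * (X a * Y b - X b * Y a).
Proof.
rewrite [X in _ - X]mulrC !mulr_suml -sumrB; apply: eq_bigr => a _.
by rewrite !mulr_sumr -sumrB; apply: eq_bigr => b _; ring.
Qed.

Lemma minor_A f g : I f -> I g -> A (minor f g).
Proof.
move=> Hf Hg; have HI := I_ideal.
have [c Hc] := deriv_dec Hf; have [d Hd] := deriv_dec Hg.
have [i1 [Hi1 E1]] := Hc vX1; have [i2 [Hi2 E2]] := Hc vY1.
have [i3 [Hi3 E3]] := Hd vX1; have [i4 [Hi4 E4]] := Hd vY1.
set al := \sum_k c k * mderiv vX1 F`_k in E1.
set be := \sum_k c k * mderiv vY1 F`_k in E2.
set ga := \sum_k d k * mderiv vX1 F`_k in E3.
set de := \sum_k d k * mderiv vY1 F`_k in E4.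
exists (i1 * (i4 + de) + al * i4 - (i3 * (i2 + be) + ga * i2)), (al * de - ga * be).
split; first by rewrite /minor E1 E2 E3 E4; ring.
split.
  apply: (idB HI); apply: (idD HI).
  - exact: (idMr HI).
  - exact: (idMl HI).
  - exact: (idMr HI).
  - exact: (idMl HI).
have -> : al * de - ga * be = \sum_a \sum_b (c a * d b) *
    (mderiv vX1 F`_a * mderiv vY1 F`_b - mderiv vX1 F`_b * mderiv vY1 F`_a).
  exact: sum_minor.
apply: (id_sum (ideal_gen_ideal _)) => a _; apply: (id_sum (ideal_gen_ideal _)) => b _.
apply: idMl; first exact: ideal_gen_ideal.
apply: ideal_gen_mem; rewrite /kahler_minors.
by apply: (allpairs_f (fun Fa Fb => _)); apply: mem_nth.
Qed.

Lemma A_fat p f : p \in D -> (2 <= mm p)%N -> A f -> Wp p f.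
Proof.
move=> Hp Hm2 [g [h [-> [Hg Hh]]]]; apply: idD; first exact: wp_ideal.
  exact: Hg.
apply: (ideal_gen_sub (wp_ideal _ _ _)) Hh => x /allpairsP [[Fa Fb] /= [Ha Hb ->]].
have HFa : Wp p Fa by apply: (proj2 (HFgen _)) (ideal_gen_mem Ha) p Hp.
have HFb : Wp p Fb by apply: (proj2 (HFgen _)) (ideal_gen_mem Hb) p Hp.
have H2 : forall u v, Wp p u -> Wp p v -> Wp p (mderiv vX1 u * mderiv vY1 v).
  move=> u v Hu Hv; apply: (@wp_le _ _ _ ((mm p).-1 + (mm p).-1)); first lia.
  by apply: wp_mul; apply: wp_deriv.
by apply: idB; [exact: wp_ideal | apply: H2 | apply: H2].
Qed.


Definition Sred := [set p in D | m p.1 p.2 == 1%N].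

Lemma in_I_of i j f : A f -> bihom (i, j) f ->
  (forall p, p \in Sred -> f.@[PP p] = 0) -> I f.
Proof.
move=> HA Hb Hev p Hp; case: (eqVneq (mm p) 1%N) => [E1|Ne].
  have Hps : p \in Sred by rewrite inE Hp -/(mm p) E1.
  have := null_pt (q1_nz Hp) (r1_nz Hp) Hb (Hev _ Hps).
  by rewrite -/(PP p) => H; rewrite -/(mm p) E1.
apply: A_fat => //; have := Hm Hp; rewrite -/(mm p); lia.
Qed.

Lemma upper i j (s : seq S) : (forall f, f \in s -> A f /\ bihom (i, j) f) ->
  indep_mod I s -> (size s <= #|Sred|)%N.
Proof.
move=> Hs Hind; rewrite leqNgt; apply/negP => Hlt.
pose M : 'M[K]_(size s, #|Sred|) := \matrix_(a, l) (s`_a).@[PP (enum_val l)].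
have Hrf : ~~ row_free M.
  rewrite /row_free; apply/negP => /eqP Hr.
  by have := rank_leq_col M; rewrite Hr leqNgt Hlt.
have HK : kermx M != 0 by rewrite kermx_eq0.
have [a0 Ha0] : exists a0, row a0 (kermx M) != 0.
  case: (boolP [exists a, row a (kermx M) != 0]) => [/existsP //|/existsPn H].
  case/negP: HK; apply/eqP/row_matrixP => a.
  by rewrite row0; apply/eqP; move: (H a) => /negPn.
set v := row a0 (kermx M).
have Hv : v *m M = 0 by rewrite /v -row_mul mulmx_ker row0.
have Hc := Hind (fun a => v 0 a).
have HI : I (\sum_(a < size s) v 0 a *: s`_a).
  apply: (@in_I_of i j).
  - apply: (id_sum A_ideal) => a _; apply: (idZ A_ideal).
    by have [] := Hs _ (mem_nth 0 (ltn_ord a)).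
  - apply: bihom_sum => a _; apply: bihomZ.
    by have [] := Hs _ (mem_nth 0 (ltn_ord a)).
  - move=> p Hp.
    have [l El] : exists l : 'I_#|Sred|, enum_val l = p.
      by exists (enum_rank_in Hp p); apply: enum_rankK_in.
    have := congr1 (fun X : 'rV[K]_#|Sred| => X 0 l) Hv.
    rewrite !mxE => E; rewrite raddf_sum -[RHS]E /=; apply: eq_bigr => a _.
    by rewrite mevalZ /M !mxE El.
have := Hc HI => H0; move/negP: Ha0; apply; apply/eqP/rowP => a.
by rewrite [RHS]mxE; apply: H0.
Qed.


Lemma bihom_dX1 a b (f : S) : bihom (a, b) f -> bihom (a.-1, b) (mderiv vX1 f).
Proof.
move=> /bihomP Hf; apply/bihomP => mo; rewrite mcoeff_mderiv.
have [->|Hn] := eqVneq (f@_(mo + U_(vX1))%MM) 0; first by rewrite mul0rn eqxx.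
move=> _; have := Hf _ Hn; rewrite bidegD bidegU.
case/andP: neq_v => /andP [/andP [h1 h2] h3] /andP [/andP [h4 h5] h6].
rewrite eqxx eq_sym (negbTE h1) (negbTE h4) (negbTE h5) /paddn /=.
rewrite /bideg /= => -[<- <-]; congr pair; lia.
Qed.

Lemma bihom_dY1 a b (f : S) : bihom (a, b) f -> bihom (a, b.-1) (mderiv vY1 f).
Proof.
move=> /bihomP Hf; apply/bihomP => mo; rewrite mcoeff_mderiv.
have [->|Hn] := eqVneq (f@_(mo + U_(vY1))%MM) 0; first by rewrite mul0rn eqxx.
move=> _; have := Hf _ Hn; rewrite bidegD bidegU.
case/andP: neq_v => /andP [/andP [h1 h2] h3] /andP [/andP [h4 h5] h6].
rewrite eqxx eq_sym (negbTE h3) eq_sym (negbTE h5) eq_sym (negbTE h6) /paddn /=.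
rewrite /bideg /= => -[<- <-]; congr pair; lia.
Qed.

Lemma ev_const c (v : 'I_4 -> K) : (- (c *: (1 : S))).@[v] = - c.
Proof. by rewrite mevalN mevalZ meval1 mulr1. Qed.

Lemma ev_dL (L V : S) i v :
  (mderiv i (L * V)).@[v] = (mderiv i L).@[v] * V.@[v] + L.@[v] * (mderiv i V).@[v].
Proof. by rewrite mderivM mevalD !mevalM. Qed.

Lemma base_elem p : p \in D -> mm p = 1%N -> exists d : nat * nat, exists E : S,
  [/\ A E, bihom d E, E.@[PP p] != 0 &
      forall p', p' \in D -> p' != p -> E.@[PP p'] = 0].
Proof.
move=> Hp E1; have [[a b] Hab] := Wsep_bihom p.
set W := Wsep p; set U := X0 K * Y0 K * W.
set f1 := L1 (qq p) * U; set f2 := L2 (rr p) * U.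
have HU : bihom ((a + 1)%N, (b + 1)%N) U.
  apply: (bihomM' (bihomM' (@bihomX0 K) (@bihomY0 K) erefl) Hab).
  by rewrite /paddn /=; congr pair; lia.
have Hf1 : bihom ((a + 2)%N, (b + 1)%N) f1.
  by apply: bihomM' (bihom_L1 (q:=qq p)) HU _; rewrite /paddn /=; congr pair; lia.
have Hf2 : bihom ((a + 1)%N, (b + 2)%N) f2.
  by apply: bihomM' (bihom_L2 (q:=rr p)) HU _; rewrite /paddn /=; congr pair; lia.
have Hloc : forall L : S, Wp p L -> I (L * U).
  move=> L HL; have -> : L * U = W * (X0 K * Y0 K * L) by rewrite /U; ring.
  apply: I_W; apply: idMl; first exact: wp_ideal.
  by apply: idMl; first exact: wp_ideal.
have If1 : I f1.
  apply: Hloc; rewrite /Wp E1.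
  by have := wp_gen (qq p) (rr p) (leqnn 1); rewrite subnn expr0 expr1 mulr1.
have If2 : I f2.
  apply: Hloc; rewrite /Wp E1.
  by have := wp_gen (qq p) (rr p) (leq0n 1); rewrite subn0 expr0 expr1 mul1r.
exists ((3 * a + 2)%N, (3 * b + 2)%N), (minor f1 f2 * W); split.
- by apply: (idMr A_ideal); apply: minor_A.
- apply: (@bihomM' ((2 * a + 2)%N, (2 * b + 2)%N) (a, b)); last 2 first.
  + exact: Hab.
  + by rewrite /paddn /=; congr pair; lia.
  rewrite /minor; apply: bihomB.
    apply: bihomM' (bihom_dX1 Hf1) (bihom_dY1 Hf2) _.
    by rewrite /paddn /=; congr pair; lia.
  apply: bihomM' (bihom_dX1 Hf2) (bihom_dY1 Hf1) _.
  by rewrite /paddn /=; congr pair; lia.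
- have HL1 : (L1 (qq p)).@[PP p] = 0 by rewrite ev_L1 mulrC subrr.
  have HL2 : (L2 (rr p)).@[PP p] = 0 by rewrite ev_L2 mulrC subrr.
  rewrite mevalM mulf_neq0 ?Wsep_ev_nz // /minor mevalB !mevalM /f1 /f2 !ev_dL.
  rewrite dX1_L1 dY1_L1 dX1_L2 dY1_L2 !ev_const HL1 HL2 meval0 !mul0r !addr0 mulr0 subr0.
  have HUp : U.@[PP p] != 0.
    rewrite /U !mevalM ev_X0 ev_Y0 !mulf_neq0 ?q1_nz ?r1_nz ?Wsep_ev_nz //.
  by rewrite !mulf_neq0 ?oppr_eq0 ?q1_nz ?r1_nz.
- by move=> p' Hp' Hne; rewrite mevalM Wsep_ev0 // mulr0.
Qed.


Definition good p (de : (nat * nat) * S) : Prop :=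
  [/\ A de.2, bihom de.1 de.2, de.2.@[PP p] != 0 &
      forall p', p' \in D -> p' != p -> de.2.@[PP p'] = 0].
Definition Ech p := epsilon (inhabits ((0%N, 0%N), (0 : S))) (good p).

Lemma Ech_good p : p \in Sred -> good p (Ech p).
Proof.
rewrite inE => /andP [Hp /eqP E1]; apply: epsilon_spec.
by have [d [E HE]] := base_elem Hp E1; exists (d, E).
Qed.

Definition shift p i j : S :=
  X0 K ^+ (i - (Ech p).1.1) * Y0 K ^+ (j - (Ech p).1.2) * (Ech p).2.

Lemma shift_props p i j : p \in Sred -> ((Ech p).1.1 <= i)%N -> ((Ech p).1.2 <= j)%N ->
  [/\ A (shift p i j), bihom (i, j) (shift p i j), (shift p i j).@[PP p] != 0 &
      forall p', p' \in D -> p' != p -> (shift p i j).@[PP p'] = 0].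
Proof.
move=> Hp Hi Hj; have [HA Hb Hnz H0] := Ech_good Hp.
have HpD : p \in D by move: Hp; rewrite inE => /andP [].
split.
- by apply: (idMl A_ideal).
- apply: (bihomM' (bihomM' (bihom_exp (k:=(i - (Ech p).1.1)%N) (@bihomX0 K))
                          (bihom_exp (k:=(j - (Ech p).1.2)%N) (@bihomY0 K)) erefl) Hb).
  by rewrite /paddn /=; case: (Ech p).1 Hi Hj => a b /= Hi Hj; congr pair; lia.
- by rewrite /shift !mevalM !rmorphXn /= ev_X0 ev_Y0 !mulf_neq0 // expf_neq0 ?q1_nz ?r1_nz.
- by move=> p' Hp' Hne; rewrite /shift mevalM H0 // mulr0.
Qed.

Definition Nmax := (\max_(p in Sred) maxn (Ech p).1.1 (Ech p).1.2)%N.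

Lemma nth_map_ord (T : Type) n (g : 'I_n -> T) (x0 : T) k (Hk : (k < n)%N) :
  nth x0 (map g (enum 'I_n)) k = g (Ordinal Hk).
Proof.
rewrite (nth_map (Ordinal Hk)) ?size_enum_ord //; congr g.
by apply: val_inj; rewrite /= nth_enum_ord.
Qed.

Lemma lower i j : (Nmax <= i)%N -> (Nmax <= j)%N -> exists s : seq S,
  [/\ size s = #|Sred|, (forall f, f \in s -> A f /\ bihom (i, j) f) & indep_mod I s].
Proof.
move=> Hi Hj.
have Hb : forall p, p \in Sred -> ((Ech p).1.1 <= i)%N /\ ((Ech p).1.2 <= j)%N.
  move=> p Hp; have := @leq_bigmax_cond _ (fun p => p \in Sred) (fun p => maxn (Ech p).1.1 (Ech p).1.2) p Hp.
  rewrite -/Nmax => H; split.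
    by apply: leq_trans (leq_trans H Hi); apply: leq_maxl.
  by apply: leq_trans (leq_trans H Hj); apply: leq_maxr.
pose g := fun l : 'I_#|Sred| => shift (enum_val l) i j.
have Hg : forall l, [/\ A (g l), bihom (i, j) (g l), (g l).@[PP (enum_val l)] != 0 &
      forall p', p' \in D -> p' != enum_val l -> (g l).@[PP p'] = 0].
  by move=> l; have [h1 h2] := Hb _ (enum_valP l); apply: shift_props => //; apply: enum_valP.
exists (map g (enum 'I_#|Sred|)); split.
- by rewrite size_map size_enum_ord.
- by move=> f /mapP [l _ ->]; have [] := Hg l.
move=> c HI k.
have Hk : (k < #|Sred|)%N := leq_trans (ltn_ord k) (eq_leq (etrans (size_map _ _) (size_enum_ord _))).
set kk := Ordinal Hk.
have HpD : enum_val kk \in D by have := enum_valP kk; rewrite inE => /andP [].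
have := I_ev HpD HI; rewrite raddf_sum (bigD1 k) //= big1 ?addr0.
  rewrite mevalZ (nth_map_ord _ _ Hk) => /eqP; rewrite mulf_eq0 => /orP [/eqP //|].
  by have [_ _ Hnz _] := Hg kk; rewrite (negbTE Hnz).
move=> k' Hk'; rewrite mevalZ.
have Hk2 : (k' < #|Sred|)%N := leq_trans (ltn_ord k') (eq_leq (etrans (size_map _ _) (size_enum_ord _))).
rewrite (nth_map_ord _ _ Hk2).
have [_ _ _ H0] := Hg (Ordinal Hk2).
rewrite H0 ?mulr0 //; apply/negP => /eqP /enum_val_inj /(congr1 val) /= E.
by move: Hk'; rewrite -val_eqE /= E eqxx.
Qed.


Lemma indep_map (inI : S -> Prop) (Pu : S -> Prop) (g : S -> S) (s : seq S) :
  (forall f, f \in s -> Pu f) ->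
  (forall n (c : 'I_n -> K) (u : 'I_n -> S), (forall k, Pu (u k)) ->
     inI (\sum_k c k *: g (u k)) -> inI (\sum_k c k *: u k)) ->
  indep_mod inI s -> indep_mod inI (map g s).
Proof.
move=> Hs Hg Hind.
have H : forall n, n = size s -> forall c : 'I_n -> K,
    inI (\sum_(k < n) c k *: (map g s)`_k) -> forall k, c k = 0.
  move=> n En; subst n => c HI; apply: Hind.
  apply: (Hg _ c (fun k => s`_k)); first by move=> k; apply: Hs; apply: mem_nth.
  by rewrite (eq_bigr (fun k => c k *: (map g s)`_k)) // => k _; rewrite (nth_map 0).
by move=> c; apply: (H _ (size_map g s) c).
Qed.

Lemma qdim_eq (inA inI : S -> Prop) dg n : is_qdim inA inI dg n -> qdim inA inI dg = n.
Proof.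
move=> Hn; have Hq : is_qdim inA inI dg (qdim inA inI dg) by apply: epsilon_spec; exists n.
case: Hn => [[s1 [E1 [H1 I1]]] B1]; case: Hq => [[s2 [E2 [H2 I2]]] B2].
apply/eqP; rewrite eqn_leq; apply/andP; split.
  by rewrite -E2; apply: B1.
by rewrite -E1; apply: B2.
Qed.

Lemma qdim_ex (inA inI : S -> Prop) dg B :
  (forall s : seq S, (forall f, f \in s -> inA f /\ bihom dg f) -> indep_mod inI s -> (size s <= B)%N) ->
  exists n, is_qdim inA inI dg n.
Proof.
move=> HB.
pose Pn n := exists s : seq S, size s = n /\ (forall f, f \in s -> inA f /\ bihom dg f)
                              /\ indep_mod inI s.
pose pb n := if excluded_middle_informative (Pn n) then true else false.
have pbP : forall n, pb n <-> Pn n.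
  by move=> n; rewrite /pb; case: excluded_middle_informative.
have ex0 : exists n, pb n.
  by exists 0%N; apply/pbP; exists [::]; split => //; split => // c _ []...
have ub : forall n, pb n -> (n <= B)%N.
  by move=> n /pbP [s [<- [Hs Hi]]]; apply: HB.
case: (ex_maxnP ex0 ub) => n /pbP Hn Hmax; exists n; split => //.
by move=> s Hs Hi; apply: Hmax; apply/pbP; exists s.
Qed.

Lemma HF_spec i j : is_qdim A I (i, j) (HF_kahler I F i j).
Proof.
have [n Hn] := qdim_ex (@upper i j).
by rewrite /HF_kahler (qdim_eq Hn).
Qed.

Lemma main_sec :
  let HF := HF_kahler I F in
  (forall i j, (HF i j <= HF i.+1 j)%N /\ (HF i j <= HF i j.+1)%N) /\
  ((forall i j, HF i j = 0%N) <-> (forall p, p \in D -> (2 <= m p.1 p.2)%N)) /\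
  (exists N, forall i j, (N <= i)%N -> (N <= j)%N ->
     HF i j = #|[set p in D | m p.1 p.2 == 1%N]|).
Proof.
move=> HF.
have Hc : forall i j, (Nmax <= i)%N -> (Nmax <= j)%N -> HF i j = #|Sred|.
  move=> i j Hi Hj; have [[s [Es [Hs Hind]]] Hb] := HF_spec i j.
  have [s' [Es' Hs' Hind']] := lower Hi Hj.
  apply/eqP; rewrite eqn_leq; apply/andP; split.
    by rewrite /HF -Es; apply: upper Hs Hind.
  by rewrite -Es'; apply: Hb.
split; last split; last by exists Nmax.
- move=> i j; have [[s [Es [Hs Hind]]] _] := HF_spec i j.
  case: Hreg => H1 _; split.
  + have [_ Hb] := HF_spec i.+1 j; rewrite /HF -Es -(size_map (fun f => X0 K * f)).
    apply: Hb.
      move=> f /mapP [g Hg ->]; have [HA Hbg] := Hs _ Hg; split.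
        by apply: (idMl A_ideal).
      by apply: (bihomM' (@bihomX0 K) Hbg); rewrite /paddn /= add0n add1n.
    apply: (indep_map (Pu := fun _ => True)) => // n c u _ HI; apply: H1.
    by rewrite mulr_sumr; under eq_bigr do rewrite -scalerAr.
  + have [_ Hb] := HF_spec i j.+1; rewrite /HF -Es -(size_map (fun f => Y0 K * f)).
    apply: Hb.
      move=> f /mapP [g Hg ->]; have [HA Hbg] := Hs _ Hg; split.
        by apply: (idMl A_ideal).
      by apply: (bihomM' (@bihomY0 K) Hbg); rewrite /paddn /= add0n add1n.
    apply: (indep_map (Pu := bihom (i, j))) => //.
      by move=> f /Hs [].
    move=> n c u Hu HI; apply: (@Y0_nzd i j).
      by apply: bihom_sum => k _; apply: bihomZ.
    by rewrite mulr_sumr; under eq_bigr do rewrite -scalerAr.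
- split.
  + move=> H0 p Hp; have := Hc _ _ (leqnn Nmax) (leqnn Nmax); rewrite H0 => /esym/eqP.
    rewrite cards_eq0 => /eqP Hemp.
    have : p \notin Sred by rewrite Hemp inE.
    rewrite inE Hp /= => Hn1; have := Hm Hp; move: Hn1.
    by case: (m p.1 p.2) => [|[|n]].
  + move=> H2 i j; have [[s [Es [Hs Hind]]] _] := HF_spec i j.
    have Hemp : #|Sred| = 0%N.
      apply/eqP; rewrite cards_eq0; apply/eqP/setP => p; rewrite inE [RHS]inE.
      case Hp: (p \in D) => //=; have := H2 _ Hp.
      by case: (m p.1 p.2) => [|[|n]].
    by apply/eqP; rewrite -leqn0 /HF -Es -Hemp; apply: upper Hs Hind.
Qed.

End Main.

End Aux.

Unset Implicit Arguments.

Theorem proposition6p2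
  (K : fieldType) (HK : [pchar K] =i pred0)
  (r t : nat) (Q : 'I_r -> K * K) (R : 'I_t -> K * K)
  (HQ : distinct_P1 Q) (HR : distinct_P1 R)
  (D : {set 'I_r * 'I_t}) (m : 'I_r -> 'I_t -> nat)
  (Hm : forall p, p \in D -> (1 <= m p.1 p.2)%N)
  (Hreg : regular_x0_y0 (in_IY Q R D m))
  (F : seq (S K))
  (HFhom : forall f, f \in F -> exists d, bihom d f)
  (HFgen : forall f, in_IY Q R D m f <-> ideal_gen F f) :
  let HF := HF_kahler (in_IY Q R D m) F in
  (forall i j, (HF i j <= HF i.+1 j)%N /\ (HF i j <= HF i j.+1)%N) /\
  ((forall i j, HF i j = 0%N) <-> (forall p, p \in D -> (2 <= m p.1 p.2)%N)) /\
  (exists N, forall i j, (N <= i)%N -> (N <= j)%N ->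
     HF i j = #|[set p in D | m p.1 p.2 == 1%N]|).
Proof.
exact: (Aux.main_sec HQ HR Hm Hreg HFgen).
Qed.
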